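(* Let $\alpha_1,\alpha_2,\alpha_3,\beta_1,\beta_2,\beta_3,\beta_4,\gamma_1,\gamma_2,\gamma_3,\gamma_4$ be positive real constants, and set $A_1=\alpha_1+\alpha_2+\alpha_3$, $A_2=\beta_1-\beta_4$, $A_3=\gamma_1-\gamma_4$. Consider the system, on the simplex $\{(x_0,x_1,x_2): x_i\ge 0,\ x_0+x_1+x_2=1\}$, $$\frac{dx_0}{dt}=\alpha_1x_0+\beta_2x_1+\gamma_2x_2-x_0(A_1x_0+A_2x_1+A_3x_2),$$ $$\frac{dx_1}{dt}=\alpha_2x_0+(\beta_1-\beta_2-\beta_3-\beta_4)x_1+\gamma_3x_2-x_1(A_1x_0+A_2x_1+A_3x_2),$$ $$\frac{dx_2}{dt}=\alpha_3x_0+\beta_3x_1+(\gamma_1-\gamma_2-\gamma_3-\gamma_4)x_2-x_2(A_1x_0+A_2x_1+A_3x_2).$$ Then this system has a unique fixed point with all coordinates positive, and this fixed point is stable.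
   Context: This is the ''reversible model'' for the proportions $x_0,x_1,x_2$ of three cancer cell phenotypes CSC$_0$, NSCC$_1$, NSCC$_2$, obtained by normalizing the linear system $dX/dt=QX$ for cell numbers $X=(X_0,X_1,X_2)$, $x_i=X_i/(X_0+X_1+X_2)$, where $$Q=\begin{pmatrix}\alpha_1&\beta_2&\gamma_2\\ \alpha_2&\beta_1-\beta_2-\beta_3-\beta_4&\gamma_3\\ \alpha_3&\beta_3&\gamma_1-\gamma_2-\gamma_3-\gamma_4\end{pmatrix}.$$ Parameters: $\alpha_1$ CSC symmetric division, $\alpha_2,\alpha_3$ asymmetric CSC division into NSCC$_1$, NSCC$_2$; $\beta_1,\gamma_1$ NSCC divisions; $\beta_2,\gamma_2$ de-differentiation to CSC; $\beta_3,\gamma_3$ interconversion between NSCC$_1$ and NSCC$_2$; $\beta_4,\gamma_4$ death rates. *)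

(* Defs.v *)
From Stdlib Require Import Reals.
From Coquelicot Require Import Coquelicot.
Open Scope R_scope.

Record params := Params {
  al1 : R; al2 : R; al3 : R;
  be1 : R; be2 : R; be3 : R; be4 : R;
  ga1 : R; ga2 : R; ga3 : R; ga4 : R }.

Definition params_pos (p : params) : Prop :=
  0 < al1 p /\ 0 < al2 p /\ 0 < al3 p /\
  0 < be1 p /\ 0 < be2 p /\ 0 < be3 p /\ 0 < be4 p /\
  0 < ga1 p /\ 0 < ga2 p /\ 0 < ga3 p /\ 0 < ga4 p.

Definition A1 (p : params) := al1 p + al2 p + al3 p.
Definition A2 (p : params) := be1 p - be4 p.
Definition A3 (p : params) := ga1 p - ga4 p.

Definition growth (p : params) (x0 x1 x2 : R) :=
  A1 p * x0 + A2 p * x1 + A3 p * x2.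

Definition F0 (p : params) (x0 x1 x2 : R) :=
  al1 p * x0 + be2 p * x1 + ga2 p * x2 - x0 * growth p x0 x1 x2.
Definition F1 (p : params) (x0 x1 x2 : R) :=
  al2 p * x0 + (be1 p - be2 p - be3 p - be4 p) * x1 + ga3 p * x2
  - x1 * growth p x0 x1 x2.
Definition F2 (p : params) (x0 x1 x2 : R) :=
  al3 p * x0 + be3 p * x1 + (ga1 p - ga2 p - ga3 p - ga4 p) * x2
  - x2 * growth p x0 x1 x2.

Definition in_simplex (x0 x1 x2 : R) : Prop :=
  0 <= x0 /\ 0 <= x1 /\ 0 <= x2 /\ x0 + x1 + x2 = 1.

Definition is_fixed_point (p : params) (x0 x1 x2 : R) : Prop :=
  F0 p x0 x1 x2 = 0 /\ F1 p x0 x1 x2 = 0 /\ F2 p x0 x1 x2 = 0.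

Definition is_solution (p : params) (x0 x1 x2 : R -> R) : Prop :=
  (forall t, 0 < t ->
     is_derive x0 t (F0 p (x0 t) (x1 t) (x2 t)) /\
     is_derive x1 t (F1 p (x0 t) (x1 t) (x2 t)) /\
     is_derive x2 t (F2 p (x0 t) (x1 t) (x2 t))) /\
  filterlim x0 (at_right 0) (locally (x0 0)) /\
  filterlim x1 (at_right 0) (locally (x1 0)) /\
  filterlim x2 (at_right 0) (locally (x2 0)).

Definition dist3 (x0 x1 x2 y0 y1 y2 : R) : R :=
  sqrt ((x0 - y0)^2 + (x1 - y1)^2 + (x2 - y2)^2).

Definition lyapunov_stable (p : params) (e0 e1 e2 : R) : Prop :=
  forall eps, 0 < eps -> exists delta, 0 < delta /\
    forall x0 x1 x2 : R -> R,
      is_solution p x0 x1 x2 ->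
      in_simplex (x0 0) (x1 0) (x2 0) ->
      dist3 (x0 0) (x1 0) (x2 0) e0 e1 e2 < delta ->
      forall t, 0 <= t -> dist3 (x0 t) (x1 t) (x2 t) e0 e1 e2 < eps.

(* Main.v *)
Require Import Defs.
From Stdlib Require Import Reals Lra Psatz Classical.
From Coquelicot Require Import Coquelicot.
Open Scope R_scope.

Definition dd1 (p : params) := be1 p - be2 p - be3 p - be4 p.
Definition dd2 (p : params) := ga1 p - ga2 p - ga3 p - ga4 p.

Definition Delta (p : params) (l : R) := (l - dd1 p) * (l - dd2 p) - ga3 p * be3 p.
Definition Pch (p : params) (l : R) :=
  (l - al1 p) * Delta p l - be2 p * (al2 p * (l - dd2 p) + ga3 p * al3 p)
  - ga2 p * (al3 p * (l - dd1 p) + be3 p * al2 p).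

Lemma root_exists (p : params) : params_pos p ->
  exists l, Pch p l = 0 /\ 0 < l - dd1 p /\ 0 < l - dd2 p /\ 0 < Delta p l.
Proof.
  unfold params_pos; intros (h1 & h2 & h3 & h4 & h5 & h6 & h7 & h8 & h9 & h10 & h11).
  set (d1 := dd1 p). set (d2 := dd2 p).
  set (q := ((d1 - d2)/2)^2 + ga3 p * be3 p).
  assert (hq : 0 < q) by (unfold q; pose proof (pow2_ge_0 ((d1 - d2)/2)); nra).
  set (r := sqrt q).
  assert (hr : r * r = q) by (apply sqrt_sqrt; lra).
  assert (hr0 : 0 < r) by (apply sqrt_lt_R0; lra).
  set (mu := (d1 + d2)/2 + r).
  assert (hm1 : 0 < mu - d1).
  { unfold mu. assert (((d1 - d2)/2)^2 < r*r) by (rewrite hr; unfold q; nra). nra. }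
  assert (hm2 : 0 < mu - d2).
  { unfold mu. assert (((d1 - d2)/2)^2 < r*r) by (rewrite hr; unfold q; nra). nra. }
  assert (hD : forall l, Delta p l = (l - mu) * (l - mu + 2 * r)).
  { intro l. unfold Delta. fold d1 d2. unfold mu.
    replace (ga3 p * be3 p) with (r*r - ((d1 - d2)/2)^2) by (rewrite hr; unfold q; ring).
    clearbody d1 d2 r. field. }
  assert (hPmu : Pch p mu < 0).
  { assert (hz : Delta p mu = 0) by (rewrite hD; ring).
    unfold Pch. rewrite hz. fold d1 d2.
    assert (0 < be2 p * (al2 p * (mu - d2) + ga3 p * al3 p)) by (apply Rmult_lt_0_compat; nra).
    assert (0 < ga2 p * (al3 p * (mu - d1) + be3 p * al2 p)) by (apply Rmult_lt_0_compat; nra).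
    lra. }
  set (al := be2 p * al2 p + ga2 p * al3 p).
  set (be := be2 p * (al2 p * (mu - d2) + ga3 p * al3 p) + ga2 p * (al3 p * (mu - d1) + be3 p * al2 p)).
  assert (hal : 0 < al) by (unfold al; apply Rplus_lt_0_compat; apply Rmult_lt_0_compat; lra).
  assert (hbe : 0 < be) by (unfold be; apply Rplus_lt_0_compat; apply Rmult_lt_0_compat; try lra; apply Rplus_lt_0_compat; apply Rmult_lt_0_compat; lra).
  set (M := mu + (1 + Rabs (mu - al1 p) + al + be)).
  assert (hPM : 0 < Pch p M).
  { set (y := 1 + Rabs (mu - al1 p) + al + be).
    assert (hy : 1 <= y) by (unfold y; pose proof (Rabs_pos (mu - al1 p)); lra).
    assert (hM1 : 1 + al + be <= M - al1 p).
    { unfold M; fold y. unfold y. pose proof (Rle_abs (- (mu - al1 p))).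
      rewrite Rabs_Ropp in H. lra. }
    assert (hDM : y * y <= Delta p M).
    { rewrite hD. unfold M; fold y. replace (mu + y - mu) with y by ring. nra. }
    assert (hlin : be2 p * (al2 p * (M - d2) + ga3 p * al3 p)
      + ga2 p * (al3 p * (M - d1) + be3 p * al2 p) = al * y + be).
    { unfold al, be, M; fold y. ring. }
    unfold Pch. fold d1 d2.
    assert (hh : (1 + al + be) * (y*y) <= (M - al1 p) * Delta p M).
    { apply Rmult_le_compat; try lra. nra. }
    assert (y <= y*y) by nra.
    assert (al * y <= al * (y*y)) by nra.
    assert (be <= be * (y*y)) by nra.
    assert (e1 : (1 + al + be) * (y*y) = y*y + al*(y*y) + be*(y*y)) by ring.
    lra. }
  assert (hcont : continuity (Pch p)).
  { unfold Pch, Delta. reg. }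
  assert (hlt : mu < M) by (unfold M; pose proof (Rabs_pos (mu - al1 p)); lra).
  destruct (IVT (Pch p) mu M hcont hlt hPmu hPM) as [l [[hl1 hl2] hl3]].
  assert (hlm : mu < l).
  { destruct hl1 as [hl1|hl1]; auto. subst l. lra. }
  exists l. split; [exact hl3|]. fold d1 d2.
  split; [lra|]. split; [lra|]. rewrite hD. nra.
Qed.

Lemma eig (p : params) : params_pos p -> exists l e0 e1 e2 w0 w1 w2,
 0 < e0 /\ 0 < e1 /\ 0 < e2 /\ e0 + e1 + e2 = 1 /\
 0 < w0 /\ 0 < w1 /\ 0 < w2 /\ w0 * e0 + w1 * e1 + w2 * e2 = 1 /\
 al1 p * e0 + be2 p * e1 + ga2 p * e2 = l * e0 /\
 al2 p * e0 + dd1 p * e1 + ga3 p * e2 = l * e1 /\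
 al3 p * e0 + be3 p * e1 + dd2 p * e2 = l * e2 /\
 w0 * al1 p + w1 * al2 p + w2 * al3 p = l * w0 /\
 w0 * be2 p + w1 * dd1 p + w2 * be3 p = l * w1 /\
 w0 * ga2 p + w1 * ga3 p + w2 * dd2 p = l * w2 /\
 0 < (l - dd1 p) * (l - dd2 p) - ga3 p * be3 p.
Proof.
  intro hp. destruct (root_exists p hp) as [l [hP [hl1 [hl2 hD]]]].
  unfold params_pos in hp.
  destruct hp as (h1 & h2 & h3 & h4 & h5 & h6 & h7 & h8 & h9 & h10 & h11).
  unfold Pch, Delta in *.
  set (d1 := dd1 p) in *. set (d2 := dd2 p) in *.
  set (D := (l - d1) * (l - d2) - ga3 p * be3 p) in *.
  assert (hDn : D <> 0) by lra.
  set (E1 := (al2 p * (l - d2) + ga3 p * al3 p) / D).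
  set (E2 := (al3 p * (l - d1) + be3 p * al2 p) / D).
  set (W1 := (be2 p * (l - d2) + be3 p * ga2 p) / D).
  set (W2 := (ga2 p * (l - d1) + ga3 p * be2 p) / D).
  assert (hE1 : 0 < E1).
  { unfold E1. apply Rdiv_lt_0_compat; auto. apply Rplus_lt_0_compat; apply Rmult_lt_0_compat; lra. }
  assert (hE2 : 0 < E2).
  { unfold E2. apply Rdiv_lt_0_compat; auto. apply Rplus_lt_0_compat; apply Rmult_lt_0_compat; lra. }
  assert (hW1 : 0 < W1).
  { unfold W1. apply Rdiv_lt_0_compat; auto. apply Rplus_lt_0_compat; apply Rmult_lt_0_compat; lra. }
  assert (hW2 : 0 < W2).
  { unfold W2. apply Rdiv_lt_0_compat; auto. apply Rplus_lt_0_compat; apply Rmult_lt_0_compat; lra. }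
  assert (r0 : al1 p + be2 p * E1 + ga2 p * E2 = l).
  { assert (H : l - (al1 p + be2 p * E1 + ga2 p * E2) =
      ((l - al1 p) * D - be2 p * (al2 p * (l - d2) + ga3 p * al3 p) -
       ga2 p * (al3 p * (l - d1) + be3 p * al2 p)) / D).
    { unfold E1, E2. field. auto. }
    rewrite hP in H. unfold Rdiv in H. rewrite Rmult_0_l in H. lra. }
  assert (r1 : al2 p + d1 * E1 + ga3 p * E2 = l * E1).
  { unfold E1, E2. unfold D in *. field. lra. }
  assert (r2 : al3 p + be3 p * E1 + d2 * E2 = l * E2).
  { unfold E1, E2. unfold D in *. field. lra. }
  assert (c0 : al1 p + W1 * al2 p + W2 * al3 p = l).
  { assert (H : l - (al1 p + W1 * al2 p + W2 * al3 p) =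
      ((l - al1 p) * D - be2 p * (al2 p * (l - d2) + ga3 p * al3 p) -
       ga2 p * (al3 p * (l - d1) + be3 p * al2 p)) / D).
    { unfold W1, W2. field. auto. }
    rewrite hP in H. unfold Rdiv in H. rewrite Rmult_0_l in H. lra. }
  assert (c1 : be2 p + W1 * d1 + W2 * be3 p = l * W1).
  { unfold W1, W2. unfold D in *. field. lra. }
  assert (c2 : ga2 p + W1 * ga3 p + W2 * d2 = l * W2).
  { unfold W1, W2. unfold D in *. field. lra. }
  set (s := 1 + E1 + E2).
  assert (hs : 0 < s) by (unfold s; lra).
  set (sg := 1 / s + W1 * (E1 / s) + W2 * (E2 / s)).
  assert (hsg : 0 < sg).
  { unfold sg. assert (0 < 1/s) by (apply Rdiv_lt_0_compat; lra).
    assert (0 < E1/s) by (apply Rdiv_lt_0_compat; lra).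
    assert (0 < E2/s) by (apply Rdiv_lt_0_compat; lra). nra. }
  exists l, (1/s), (E1/s), (E2/s), (1/sg), (W1/sg), (W2/sg).
  repeat split.
  - apply Rdiv_lt_0_compat; lra.
  - apply Rdiv_lt_0_compat; lra.
  - apply Rdiv_lt_0_compat; lra.
  - unfold s. field. lra.
  - apply Rdiv_lt_0_compat; lra.
  - apply Rdiv_lt_0_compat; lra.
  - apply Rdiv_lt_0_compat; lra.
  - replace (1/sg*(1/s) + W1/sg*(E1/s) + W2/sg*(E2/s)) with ((1/s + W1*(E1/s) + W2*(E2/s))/sg) by (field; repeat split; lra).
    fold sg. field. lra.
  - rewrite <- r0. field. lra.
  - replace (l * (E1/s)) with ((l*E1)/s) by (field; lra). rewrite <- r1. field. lra.
  - replace (l * (E2/s)) with ((l*E2)/s) by (field; lra). rewrite <- r2. field. lra.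
  - rewrite <- c0. field. lra.
  - replace (l * (W1/sg)) with ((l*W1)/sg) by (field; lra). rewrite <- c1. field. lra.
  - replace (l * (W2/sg)) with ((l*W2)/sg) by (field; lra). rewrite <- c2. field. lra.
  - exact hD.
Qed.

Definition EigenData (p : params) (l e0 e1 e2 w0 w1 w2 : R) : Prop :=
 0 < e0 /\ 0 < e1 /\ 0 < e2 /\ e0 + e1 + e2 = 1 /\
 0 < w0 /\ 0 < w1 /\ 0 < w2 /\ w0 * e0 + w1 * e1 + w2 * e2 = 1 /\
 al1 p * e0 + be2 p * e1 + ga2 p * e2 = l * e0 /\
 al2 p * e0 + dd1 p * e1 + ga3 p * e2 = l * e1 /\
 al3 p * e0 + be3 p * e1 + dd2 p * e2 = l * e2 /\
 w0 * al1 p + w1 * al2 p + w2 * al3 p = l * w0 /\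
 w0 * be2 p + w1 * dd1 p + w2 * be3 p = l * w1 /\
 w0 * ga2 p + w1 * ga3 p + w2 * dd2 p = l * w2 /\
 0 < (l - dd1 p) * (l - dd2 p) - ga3 p * be3 p.

Lemma growth_sum p x0 x1 x2 : growth p x0 x1 x2 =
  (al1 p * x0 + be2 p * x1 + ga2 p * x2) + (al2 p * x0 + dd1 p * x1 + ga3 p * x2)
  + (al3 p * x0 + be3 p * x1 + dd2 p * x2).
Proof. unfold growth, Defs.A1, Defs.A2, Defs.A3, dd1, dd2. ring. Qed.

Lemma e_fixed p l e0 e1 e2 w0 w1 w2 : EigenData p l e0 e1 e2 w0 w1 w2 ->
  is_fixed_point p e0 e1 e2.
Proof.
  intros (he0 & he1 & he2 & hs & hw0 & hw1 & hw2 & hn & r0 & r1 & r2 & c0 & c1 & c2 & hD).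
  assert (hg : growth p e0 e1 e2 = l) by (rewrite growth_sum; nra).
  unfold is_fixed_point, F0, F1, F2. rewrite hg.
  fold (dd1 p) (dd2 p). repeat split; nra.
Qed.

Lemma uniq_fixed p l e0 e1 e2 w0 w1 w2 : params_pos p -> EigenData p l e0 e1 e2 w0 w1 w2 ->
  forall y0 y1 y2 : R,
       0 < y0 -> 0 < y1 -> 0 < y2 -> in_simplex y0 y1 y2 ->
       is_fixed_point p y0 y1 y2 -> y0 = e0 /\ y1 = e1 /\ y2 = e2.
Proof.
  intros hp (he0 & he1 & he2 & hs & hw0 & hw1 & hw2 & hn & r0 & r1 & r2 & c0 & c1 & c2 & hD).
  intros y0 y1 y2 hy0 hy1 hy2 (_ & _ & _ & hys) (f0 & f1 & f2).
  unfold F0, F1, F2 in *. fold (dd1 p) (dd2 p) in *.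
  set (g := growth p y0 y1 y2) in *.
  assert (hdot : w0 * (al1 p * y0 + be2 p * y1 + ga2 p * y2) + w1 * (al2 p * y0 + dd1 p * y1 + ga3 p * y2)
     + w2 * (al3 p * y0 + be3 p * y1 + dd2 p * y2) = l * (w0 * y0 + w1 * y1 + w2 * y2)).
  { transitivity (y0 * (w0 * al1 p + w1 * al2 p + w2 * al3 p) + y1 * (w0 * be2 p + w1 * dd1 p + w2 * be3 p)
       + y2 * (w0 * ga2 p + w1 * ga3 p + w2 * dd2 p)); [ring|]. rewrite c0, c1, c2. ring. }
  assert (hwy : 0 < w0 * y0 + w1 * y1 + w2 * y2) by nra.
  assert (hgl : g = l).
  { assert (H : g * (w0 * y0 + w1 * y1 + w2 * y2) = l * (w0 * y0 + w1 * y1 + w2 * y2)) by nra.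
    apply Rmult_eq_reg_r in H; lra. }
  rewrite hgl in f0, f1, f2.
  set (c := y0 / e0).
  assert (hy0c : y0 = c * e0) by (unfold c; field; lra).
  set (z1 := y1 - c * e1). set (z2 := y2 - c * e2).
  assert (q1 : dd1 p * z1 + ga3 p * z2 = l * z1).
  { unfold z1, z2. rewrite hy0c in f1.
    assert (c * (al2 p * e0 + dd1 p * e1 + ga3 p * e2) = c * (l * e1)) by (rewrite r1; ring). lra. }
  assert (q2 : be3 p * z1 + dd2 p * z2 = l * z2).
  { unfold z1, z2. rewrite hy0c in f2.
    assert (c * (al3 p * e0 + be3 p * e1 + dd2 p * e2) = c * (l * e2)) by (rewrite r2; ring). lra. }
  assert (hz1 : z1 = 0).
  { assert (a1 : (l - dd2 p) * ((l - dd1 p) * z1) = (l - dd2 p) * (ga3 p * z2)) by (f_equal; lra).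
    assert (a2 : ga3 p * ((l - dd2 p) * z2) = ga3 p * (be3 p * z1)) by (f_equal; lra).
    assert (H : ((l - dd1 p) * (l - dd2 p) - ga3 p * be3 p) * z1 = 0) by lra.
    apply Rmult_integral in H. lra. }
  assert (hz2 : z2 = 0).
  { unfold params_pos in hp. assert (ga3 p * z2 = 0) by nra.
    apply Rmult_integral in H. lra. }
  assert (hc : c = 1).
  { unfold z1, z2 in *. nra. }
  unfold z1, z2 in *. rewrite hc in *. lra.
Qed.

Definition Q0 p (x0 x1 x2 : R) := al1 p * x0 + be2 p * x1 + ga2 p * x2.
Definition Q1 p (x0 x1 x2 : R) := al2 p * x0 + dd1 p * x1 + ga3 p * x2.
Definition Q2 p (x0 x1 x2 : R) := al3 p * x0 + be3 p * x1 + dd2 p * x2.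
Definition Nf (e0 e1 e2 w0 w1 w2 x0 x1 x2 : R) :=
  w0 * (x0 * x0) / e0 + w1 * (x1 * x1) / e1 + w2 * (x2 * x2) / e2.
Definition Df (w0 w1 w2 x0 x1 x2 : R) := w0 * x0 + w1 * x1 + w2 * x2.
Definition Bf p l (e0 e1 e2 w0 w1 w2 x0 x1 x2 : R) :=
  w0 * x0 * Q0 p x0 x1 x2 / e0 + w1 * x1 * Q1 p x0 x1 x2 / e1 + w2 * x2 * Q2 p x0 x1 x2 / e2
  - l * Nf e0 e1 e2 w0 w1 w2 x0 x1 x2.

Lemma B_nonpos p l e0 e1 e2 w0 w1 w2 : params_pos p -> EigenData p l e0 e1 e2 w0 w1 w2 ->
  forall x0 x1 x2, Bf p l e0 e1 e2 w0 w1 w2 x0 x1 x2 <= 0.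
Proof.
  intros hp (he0 & he1 & he2 & hs & hw0 & hw1 & hw2 & hn & r0 & r1 & r2 & c0 & c1 & c2 & hD).
  unfold params_pos in hp.
  destruct hp as (h1 & h2 & h3 & h4 & h5 & h6 & h7 & h8 & h9 & h10 & h11).
  intros x0 x1 x2.
  set (v0 := x0 / e0). set (v1 := x1 / e1). set (v2 := x2 / e2).
  assert (ex0 : x0 = e0 * v0) by (unfold v0; field; lra).
  assert (ex1 : x1 = e1 * v1) by (unfold v1; field; lra).
  assert (ex2 : x2 = e2 * v2) by (unfold v2; field; lra).
  assert (HB : Bf p l e0 e1 e2 w0 w1 w2 x0 x1 x2 =
    w0 * v0 * Q0 p (e0*v0) (e1*v1) (e2*v2) + w1 * v1 * Q1 p (e0*v0) (e1*v1) (e2*v2)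
    + w2 * v2 * Q2 p (e0*v0) (e1*v1) (e2*v2)
    - l * (w0 * e0 * (v0*v0) + w1 * e1 * (v1*v1) + w2 * e2 * (v2*v2))).
  { unfold Bf, Nf. rewrite ex0, ex1, ex2. field. repeat split; lra. }
  rewrite HB. unfold Q0, Q1, Q2.
  assert (HI :
    w0 * v0 * (al1 p * (e0 * v0) + be2 p * (e1 * v1) + ga2 p * (e2 * v2)) +
    w1 * v1 * (al2 p * (e0 * v0) + dd1 p * (e1 * v1) + ga3 p * (e2 * v2)) +
    w2 * v2 * (al3 p * (e0 * v0) + be3 p * (e1 * v1) + dd2 p * (e2 * v2)) -
    l * (w0 * e0 * (v0 * v0) + w1 * e1 * (v1 * v1) + w2 * e2 * (v2 * v2))
    = - / 2 * ((w0 * be2 p * e1 + w1 * al2 p * e0) * ((v0 - v1) * (v0 - v1))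
             + (w0 * ga2 p * e2 + w2 * al3 p * e0) * ((v0 - v2) * (v0 - v2))
             + (w1 * ga3 p * e2 + w2 * be3 p * e1) * ((v1 - v2) * (v1 - v2)))
      + / 2 * (v0 * v0 * (w0 * (al1 p * e0 + be2 p * e1 + ga2 p * e2 - l * e0)
                          + e0 * (w0 * al1 p + w1 * al2 p + w2 * al3 p - l * w0))
             + v1 * v1 * (w1 * (al2 p * e0 + dd1 p * e1 + ga3 p * e2 - l * e1)
                          + e1 * (w0 * be2 p + w1 * dd1 p + w2 * be3 p - l * w1))
             + v2 * v2 * (w2 * (al3 p * e0 + be3 p * e1 + dd2 p * e2 - l * e2)
                          + e2 * (w0 * ga2 p + w1 * ga3 p + w2 * dd2 p - l * w2)))).
  { field. }
  rewrite HI. rewrite r0, r1, r2, c0, c1, c2.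
  assert (0 <= (w0 * be2 p * e1 + w1 * al2 p * e0) * ((v0 - v1) * (v0 - v1))).
  { apply Rmult_le_pos; [|exact (Rle_0_sqr _)]. assert (0 < w0 * be2 p * e1) by (repeat apply Rmult_lt_0_compat; lra).
    assert (0 < w1 * al2 p * e0) by (repeat apply Rmult_lt_0_compat; lra). lra. }
  assert (0 <= (w0 * ga2 p * e2 + w2 * al3 p * e0) * ((v0 - v2) * (v0 - v2))).
  { apply Rmult_le_pos; [|exact (Rle_0_sqr _)]. assert (0 < w0 * ga2 p * e2) by (repeat apply Rmult_lt_0_compat; lra).
    assert (0 < w2 * al3 p * e0) by (repeat apply Rmult_lt_0_compat; lra). lra. }
  assert (0 <= (w1 * ga3 p * e2 + w2 * be3 p * e1) * ((v1 - v2) * (v1 - v2))).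
  { apply Rmult_le_pos; [|exact (Rle_0_sqr _)]. assert (0 < w1 * ga3 p * e2) by (repeat apply Rmult_lt_0_compat; lra).
    assert (0 < w2 * be3 p * e1) by (repeat apply Rmult_lt_0_compat; lra). lra. }
  replace (l * e0 - l * e0) with 0 by ring. replace (l * e1 - l * e1) with 0 by ring.
  replace (l * e2 - l * e2) with 0 by ring. replace (l * w0 - l * w0) with 0 by ring.
  replace (l * w1 - l * w1) with 0 by ring. replace (l * w2 - l * w2) with 0 by ring.
  lra.
Qed.

Lemma lower_v (e0 e1 e2 p0 p1 p2 v0 v1 v2 eta : R) :
  0 < e0 -> 0 < e1 -> 0 < e2 -> e0 + e1 + e2 = 1 ->
  0 < p0 -> 0 < p1 -> 0 < p2 -> p0 + p1 + p2 = 1 ->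
  e0 * v0 + e1 * v1 + e2 * v2 = 1 ->
  0 <= eta -> eta <= p0 * p1 * p2 / 8 ->
  p0 * (v0*v0) + p1 * (v1*v1) + p2 * (v2*v2) <=
     (1 + eta) * ((p0 * v0 + p1 * v1 + p2 * v2) * (p0 * v0 + p1 * v1 + p2 * v2)) ->
  (e0*v0 - e0)^2 + (e1*v1 - e1)^2 + (e2*v2 - e2)^2 <= 12 * eta / (p0 * p1 * p2).
Proof.
  intros he0 he1 he2 hes hp0 hp1 hp2 hps hv heta0 heta hN.
  set (m := p0 * p1 * p2).
  assert (hm : 0 < m) by (unfold m; repeat apply Rmult_lt_0_compat; lra).
  set (D := p0 * v0 + p1 * v1 + p2 * v2) in *.
  set (N := p0 * (v0*v0) + p1 * (v1*v1) + p2 * (v2*v2)) in *.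
  set (a := (v0 - v1) * (v0 - v1)). set (b := (v0 - v2) * (v0 - v2)). set (c := (v1 - v2) * (v1 - v2)).
  set (S := a + b + c).
  assert (ha : 0 <= a) by apply Rle_0_sqr. assert (hb : 0 <= b) by apply Rle_0_sqr.
  assert (hc : 0 <= c) by apply Rle_0_sqr.
  assert (L1 : N - D * D = p0 * p1 * a + p0 * p2 * b + p1 * p2 * c).
  { transitivity (N * (p0 + p1 + p2) - D * D). rewrite hps; ring.
    unfold N, D, a, b, c. ring. }
  assert (m01 : m <= p0 * p1).
  { unfold m. assert (p0 * p1 * p2 <= p0 * p1 * 1).
    apply Rmult_le_compat_l; [apply Rmult_le_pos|]; lra. lra. }
  assert (m02 : m <= p0 * p2).
  { unfold m. assert (p0 * p2 * p1 <= p0 * p2 * 1).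
    apply Rmult_le_compat_l; [apply Rmult_le_pos|]; lra. lra. }
  assert (m12 : m <= p1 * p2).
  { unfold m. assert (p1 * p2 * p0 <= p1 * p2 * 1).
    apply Rmult_le_compat_l; [apply Rmult_le_pos|]; lra. lra. }
  assert (L2 : m * S <= N - D * D).
  { rewrite L1. unfold S.
    assert (m * a <= p0 * p1 * a) by (apply Rmult_le_compat_r; lra).
    assert (m * b <= p0 * p2 * b) by (apply Rmult_le_compat_r; lra).
    assert (m * c <= p1 * p2 * c) by (apply Rmult_le_compat_r; lra). lra. }
  assert (L3 : N - D * D <= eta * (D * D)) by lra.
  assert (L4 : D - 1 = (p1 - e1) * (v1 - v0) + (p2 - e2) * (v2 - v0)).
  { rewrite <- hv. unfold D.
    replace p0 with (1 - p1 - p2) by lra. replace e0 with (1 - e1 - e2) by lra. ring. }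
  assert (L5 : (D - 1) * (D - 1) <= 2 * S).
  { rewrite L4.
    assert (q1 : (p1 - e1) * (p1 - e1) <= 1) by nra.
    assert (q2 : (p2 - e2) * (p2 - e2) <= 1) by nra.
    set (u := v1 - v0). set (w := v2 - v0).
    assert (hu : u * u = a) by (unfold u, a; ring).
    assert (hw : w * w = b) by (unfold w, b; ring).
    assert (((p1 - e1) * u + (p2 - e2) * w) * ((p1 - e1) * u + (p2 - e2) * w)
        <= 2 * ((p1 - e1) * (p1 - e1) * (u*u)) + 2 * ((p2 - e2) * (p2 - e2) * (w * w))).
    { pose proof (Rle_0_sqr ((p1 - e1) * u - (p2 - e2) * w)). unfold Rsqr in H. nra. }
    assert ((p1 - e1) * (p1 - e1) * (u*u) <= u * u).
    { pose proof (Rle_0_sqr u). unfold Rsqr in H0. nra. }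
    assert ((p2 - e2) * (p2 - e2) * (w*w) <= w * w).
    { pose proof (Rle_0_sqr w). unfold Rsqr in H1. nra. }
    unfold S. lra. }
  assert (L6 : D * D <= 2 + 4 * S).
  { pose proof (Rle_0_sqr (D - 2)). unfold Rsqr in H. nra. }
  assert (L7 : S <= 4 * eta / m).
  { assert (m * S <= eta * (2 + 4 * S)).
    { assert (eta * (D * D) <= eta * (2 + 4 * S)) by (apply Rmult_le_compat_l; lra). lra. }
    assert (hS : 0 <= S) by (unfold S; lra).
    assert (eta * S <= m / 8 * S) by (apply Rmult_le_compat_r; unfold m; lra).
    apply (Rmult_le_reg_l m); auto.
    replace (m * (4 * eta / m)) with (4 * eta) by (field; lra). lra. }
  assert (Jens : forall vi, e0 * vi + e1 * vi + e2 * vi = vi).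
  { intro vi. replace (e0 * vi + e1 * vi + e2 * vi) with ((e0 + e1 + e2) * vi) by ring.
    rewrite hes; ring. }
  assert (key : forall k0 k1 k2, (e0 * k0 + e1 * k1 + e2 * k2) * (e0 * k0 + e1 * k1 + e2 * k2)
     <= e0 * (k0*k0) + e1 * (k1*k1) + e2 * (k2*k2)).
  { intros k0 k1 k2.
    pose proof (Rle_0_sqr (k0 - k1)). pose proof (Rle_0_sqr (k0 - k2)). pose proof (Rle_0_sqr (k1 - k2)).
    unfold Rsqr in *.
    assert (E : e0 * (k0*k0) + e1 * (k1*k1) + e2 * (k2*k2) -
       (e0 * k0 + e1 * k1 + e2 * k2) * (e0 * k0 + e1 * k1 + e2 * k2)
       = e0 * e1 * ((k0 - k1) * (k0 - k1)) + e0 * e2 * ((k0 - k2) * (k0 - k2)) + e1 * e2 * ((k1 - k2) * (k1 - k2))).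
    { transitivity ((e0 * (k0*k0) + e1 * (k1*k1) + e2 * (k2*k2)) * (e0 + e1 + e2) -
       (e0 * k0 + e1 * k1 + e2 * k2) * (e0 * k0 + e1 * k1 + e2 * k2)). rewrite hes; ring. ring. }
    assert (0 <= e0 * e1 * ((k0 - k1) * (k0 - k1))) by (apply Rmult_le_pos; [apply Rmult_le_pos|]; lra).
    assert (0 <= e0 * e2 * ((k0 - k2) * (k0 - k2))) by (apply Rmult_le_pos; [apply Rmult_le_pos|]; lra).
    assert (0 <= e1 * e2 * ((k1 - k2) * (k1 - k2))) by (apply Rmult_le_pos; [apply Rmult_le_pos|]; lra).
    lra. }
  assert (G : forall ei vi, 0 < ei -> ei <= 1 ->
     vi - 1 = e0 * (vi - v0) + e1 * (vi - v1) + e2 * (vi - v2) ->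
     (vi - v0) * (vi - v0) + (vi - v1) * (vi - v1) + (vi - v2) * (vi - v2) <= S ->
     (ei * vi - ei) ^ 2 <= S).
  { intros ei vi hei hei1 hE hS.
    pose proof (key (vi - v0) (vi - v1) (vi - v2)) as K. rewrite <- hE in K.
    assert (e0 * ((vi - v0) * (vi - v0)) <= (vi - v0) * (vi - v0)).
    { pose proof (Rle_0_sqr (vi - v0)). unfold Rsqr in H. nra. }
    assert (e1 * ((vi - v1) * (vi - v1)) <= (vi - v1) * (vi - v1)).
    { pose proof (Rle_0_sqr (vi - v1)). unfold Rsqr in H0. nra. }
    assert (e2 * ((vi - v2) * (vi - v2)) <= (vi - v2) * (vi - v2)).
    { pose proof (Rle_0_sqr (vi - v2)). unfold Rsqr in H1. nra. }
    replace ((ei * vi - ei) ^ 2) with (ei * ei * ((vi - 1) * (vi - 1))) by ring.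
    assert (ei * ei * ((vi - 1) * (vi - 1)) <= (vi - 1) * (vi - 1)).
    { pose proof (Rle_0_sqr (vi - 1)). unfold Rsqr in H2. assert (ei * ei <= 1) by nra. nra. }
    lra. }
  assert (T0 : (e0 * v0 - e0) ^ 2 <= S).
  { apply G; try lra. rewrite <- hv. replace (v0 - (e0 * v0 + e1 * v1 + e2 * v2)) with
       (v0 * (1 - e0 - e1 - e2) + e0 * (v0 - v0) + e1 * (v0 - v1) + e2 * (v0 - v2)) by ring.
    replace (1 - e0 - e1 - e2) with 0 by lra. ring.
    unfold S. change ((v0 - v1) * (v0 - v1)) with a. change ((v0 - v2) * (v0 - v2)) with b.
    replace ((v0 - v0) * (v0 - v0)) with 0 by ring. lra. }
  assert (T1 : (e1 * v1 - e1) ^ 2 <= S).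
  { apply G; try lra. rewrite <- hv. replace (v1 - (e0 * v0 + e1 * v1 + e2 * v2)) with
       (v1 * (1 - e0 - e1 - e2) + e0 * (v1 - v0) + e1 * (v1 - v1) + e2 * (v1 - v2)) by ring.
    replace (1 - e0 - e1 - e2) with 0 by lra. ring.
    unfold S. replace ((v1 - v0) * (v1 - v0)) with a by (unfold a; ring). change ((v1 - v2) * (v1 - v2)) with c.
    replace ((v1 - v1) * (v1 - v1)) with 0 by ring. lra. }
  assert (T2 : (e2 * v2 - e2) ^ 2 <= S).
  { apply G; try lra. rewrite <- hv. replace (v2 - (e0 * v0 + e1 * v1 + e2 * v2)) with
       (v2 * (1 - e0 - e1 - e2) + e0 * (v2 - v0) + e1 * (v2 - v1) + e2 * (v2 - v2)) by ring.
    replace (1 - e0 - e1 - e2) with 0 by lra. ring.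
    unfold S. replace ((v2 - v0) * (v2 - v0)) with b by (unfold b; ring).
    replace ((v2 - v1) * (v2 - v1)) with c by (unfold c; ring).
    replace ((v2 - v2) * (v2 - v2)) with 0 by ring. lra. }
  fold m. replace (12 * eta / m) with (3 * (4 * eta / m)) by (field; lra). lra.
Qed.

Lemma upper_v (e0 e1 e2 w0 w1 w2 v0 v1 v2 ce : R) :
  0 < e0 -> 0 < e1 -> 0 < e2 -> e0 + e1 + e2 = 1 ->
  0 < w0 -> 0 < w1 -> 0 < w2 -> w0 * e0 + w1 * e1 + w2 * e2 = 1 ->
  1 <= ce * (e0 * e0) -> 1 <= ce * (e1 * e1) -> 1 <= ce * (e2 * e2) ->
  let h := (e0*v0 - e0)^2 + (e1*v1 - e1)^2 + (e2*v2 - e2)^2 in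
  h * (4 * ((w0 + w1 + w2) * (w0 + w1 + w2))) <= 1 ->
  let D := w0 * e0 * v0 + w1 * e1 * v1 + w2 * e2 * v2 in
  1/2 <= D /\
  w0 * e0 * (v0*v0) + w1 * e1 * (v1*v1) + w2 * e2 * (v2*v2) <= (1 + 48 * ce * h) * (D * D).
Proof.
  intros he0 he1 he2 hes hw0 hw1 hw2 hn c0 c1 c2 h hh D.
  set (y0 := v0 - 1). set (y1 := v1 - 1). set (y2 := v2 - 1).
  assert (hh' : h = e0 * e0 * (y0 * y0) + e1 * e1 * (y1 * y1) + e2 * e2 * (y2 * y2)) by (unfold h, y0, y1, y2; ring).
  assert (hD1 : D - 1 = w0 * (e0 * y0) + w1 * (e1 * y1) + w2 * (e2 * y2)).
  { rewrite <- hn. unfold D, y0, y1, y2. ring. }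
  assert (CS : (D - 1) * (D - 1) <= (w0 + w1 + w2) * (w0 + w1 + w2) * h).
  { rewrite hD1, hh'.
    set (a0 := e0 * y0). set (a1 := e1 * y1). set (a2 := e2 * y2).
    replace (e0 * e0 * (y0 * y0)) with (a0 * a0) by (unfold a0; ring).
    replace (e1 * e1 * (y1 * y1)) with (a1 * a1) by (unfold a1; ring).
    replace (e2 * e2 * (y2 * y2)) with (a2 * a2) by (unfold a2; ring).
    pose proof (Rle_0_sqr (a0 - a1)). pose proof (Rle_0_sqr (a0 - a2)). pose proof (Rle_0_sqr (a1 - a2)).
    pose proof (Rle_0_sqr a0). pose proof (Rle_0_sqr a1). pose proof (Rle_0_sqr a2).
    unfold Rsqr in *.
    assert (E : (w0 + w1 + w2) * (w0 + w1 + w2) * (a0 * a0 + a1 * a1 + a2 * a2)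
       - (w0 * a0 + w1 * a1 + w2 * a2) * (w0 * a0 + w1 * a1 + w2 * a2)
       = (w0 * a1 - w1 * a0) * (w0 * a1 - w1 * a0) + (w0 * a2 - w2 * a0) * (w0 * a2 - w2 * a0)
         + (w1 * a2 - w2 * a1) * (w1 * a2 - w2 * a1)
         + 2 * (w0 * w1 + w0 * w2 + w1 * w2) * (a0 * a0 + a1 * a1 + a2 * a2)) by ring.
    pose proof (Rle_0_sqr (w0 * a1 - w1 * a0)). pose proof (Rle_0_sqr (w0 * a2 - w2 * a0)).
    pose proof (Rle_0_sqr (w1 * a2 - w2 * a1)). unfold Rsqr in *.
    assert (0 <= 2 * (w0 * w1 + w0 * w2 + w1 * w2) * (a0 * a0 + a1 * a1 + a2 * a2)).
    { apply Rmult_le_pos; [|lra]. assert (0 < w0 * w1) by nra. assert (0 < w0 * w2) by nra.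
      assert (0 < w1 * w2) by nra. lra. }
    lra. }
  assert (hD : 1/2 <= D).
  { assert ((D - 1) * (D - 1) <= 1/4) by lra. nra. }
  split; [exact hD|].
  assert (L1 : w0 * e0 * (v0*v0) + w1 * e1 * (v1*v1) + w2 * e2 * (v2*v2) - D * D
     = (w0 * e0) * (w1 * e1) * ((v0 - v1) * (v0 - v1)) + (w0 * e0) * (w2 * e2) * ((v0 - v2) * (v0 - v2))
       + (w1 * e1) * (w2 * e2) * ((v1 - v2) * (v1 - v2))).
  { transitivity ((w0 * e0 * (v0*v0) + w1 * e1 * (v1*v1) + w2 * e2 * (v2*v2)) * (w0 * e0 + w1 * e1 + w2 * e2) - D * D).
    rewrite hn; ring. unfold D; ring. }
  assert (pb : forall a b, 0 < a -> 0 < b -> a + b <= 1 -> a * b <= 1) by (intros; nra).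
  assert (p0 : 0 < w0 * e0) by nra. assert (p1 : 0 < w1 * e1) by nra. assert (p2 : 0 < w2 * e2) by nra.
  assert (b01 : w0 * e0 * (w1 * e1) <= 1) by (apply pb; lra).
  assert (b02 : w0 * e0 * (w2 * e2) <= 1) by (apply pb; lra).
  assert (b12 : w1 * e1 * (w2 * e2) <= 1) by (apply pb; lra).
  assert (vy : forall vi vj yi yj, yi = vi - 1 -> yj = vj - 1 -> (vi - vj) * (vi - vj) <= 2 * (yi * yi) + 2 * (yj * yj)).
  { intros vi vj yi yj -> ->. pose proof (Rle_0_sqr (vi + vj - 2)). unfold Rsqr in H. nra. }
  assert (t01 := vy v0 v1 y0 y1 eq_refl eq_refl).
  assert (t02 := vy v0 v2 y0 y2 eq_refl eq_refl).
  assert (t12 := vy v1 v2 y1 y2 eq_refl eq_refl).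
  assert (Sb : w0 * e0 * (v0*v0) + w1 * e1 * (v1*v1) + w2 * e2 * (v2*v2) - D * D <=
     4 * (y0 * y0 + y1 * y1 + y2 * y2)).
  { rewrite L1.
    pose proof (Rle_0_sqr (v0 - v1)). pose proof (Rle_0_sqr (v0 - v2)). pose proof (Rle_0_sqr (v1 - v2)).
    unfold Rsqr in *.
    assert (w0 * e0 * (w1 * e1) * ((v0 - v1) * (v0 - v1)) <= (v0 - v1) * (v0 - v1)) by nra.
    assert (w0 * e0 * (w2 * e2) * ((v0 - v2) * (v0 - v2)) <= (v0 - v2) * (v0 - v2)) by nra.
    assert (w1 * e1 * (w2 * e2) * ((v1 - v2) * (v1 - v2)) <= (v1 - v2) * (v1 - v2)) by nra.
    lra. }
  assert (yb : forall ei yi, 1 <= ce * (ei * ei) -> yi * yi <= ce * (ei * ei * (yi * yi))).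
  { intros ei yi H. pose proof (Rle_0_sqr yi). unfold Rsqr in H0. nra. }
  assert (Yb : y0 * y0 + y1 * y1 + y2 * y2 <= ce * h).
  { rewrite hh'. pose proof (yb e0 y0 c0). pose proof (yb e1 y1 c1). pose proof (yb e2 y2 c2). lra. }
  assert (hce : 0 <= ce).
  { destruct (Rle_or_lt 0 ce); auto. assert (ce * (e0 * e0) < 0). apply Rmult_neg_pos; nra. lra. }
  assert (hh0 : 0 <= h) by (unfold h; pose proof (pow2_ge_0 (e0*v0 - e0)); pose proof (pow2_ge_0 (e1*v1 - e1)); pose proof (pow2_ge_0 (e2*v2 - e2)); lra).
  assert (hDD : 1/4 <= D * D) by nra.
  assert (0 <= ce * h) by (apply Rmult_le_pos; auto).
  assert (12 * (ce * h) <= 48 * ce * h * (D * D)) by nra.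
  nra.
Qed.

Lemma ball_R (x e y : R) : ball x e y <-> Rabs (y - x) < e.
Proof. split; intro H; exact H. Qed.

Lemma cont_eps (f : R -> R) t : continuous f t ->
  forall eps, 0 < eps -> exists eta, 0 < eta /\ forall tau, Rabs (tau - t) < eta -> Rabs (f tau - f t) < eps.
Proof.
  intros H eps he.
  destruct (proj1 (filterlim_locally f (f t)) H (mkposreal eps he)) as [d Hd].
  exists d. split; [apply cond_pos|]. intros tau Ht. apply (Hd tau). exact Ht.
Qed.

Lemma right_eps (f : R -> R) a : filterlim f (at_right 0) (locally a) ->
  forall eps, 0 < eps -> exists eta, 0 < eta /\ forall tau, 0 < tau < eta -> Rabs (f tau - a) < eps.
Proof.
  intros H eps he.
  destruct (proj1 (filterlim_locally f a) H (mkposreal eps he)) as [d Hd].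
  exists d. split; [apply cond_pos|]. intros tau [Ht1 Ht2]. apply (Hd tau); auto.
  apply ball_R. rewrite Rminus_0_r, Rabs_pos_eq; lra.
Qed.

Lemma RL_plus (f g : R -> R) (a b : R) : filterlim f (at_right 0) (locally a) -> filterlim g (at_right 0) (locally b) ->
  filterlim (fun t => f t + g t) (at_right 0) (locally (a + b)).
Proof. intros Hf Hg. eapply filterlim_comp_2; [exact Hf | exact Hg | exact (@filterlim_plus R_AbsRing R_NormedModule a b)]. Qed.

Lemma RL_mult (f g : R -> R) (a b : R) : filterlim f (at_right 0) (locally a) -> filterlim g (at_right 0) (locally b) ->
  filterlim (fun t => f t * g t) (at_right 0) (locally (a * b)).
Proof. intros Hf Hg. eapply filterlim_comp_2; [exact Hf | exact Hg | exact (@filterlim_mult R_AbsRing a b)]. Qed.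

Lemma RL_const (a : R) : filterlim (fun _ : R => a) (at_right 0) (locally a).
Proof. apply filterlim_const. Qed.

Lemma RL_comp (f phi : R -> R) a : filterlim f (at_right 0) (locally a) -> continuous phi a ->
  filterlim (fun t => phi (f t)) (at_right 0) (locally (phi a)).
Proof. intros Hf Hp. eapply filterlim_comp; eauto. Qed.

Lemma RL_inv (f : R -> R) (a : R) : filterlim f (at_right 0) (locally a) -> a <> 0 ->
  filterlim (fun t => / f t) (at_right 0) (locally (/ a)).
Proof.
  intros Hf Ha. apply (RL_comp f Rinv a Hf).
  apply (@ex_derive_continuous R_AbsRing R_NormedModule). auto_derive. auto.
Qed.

Lemma mono_int (f df : R -> R) a T : 0 < a <= T ->
  (forall t, a <= t <= T -> is_derive f t (df t)) ->
  (forall t, a <= t <= T -> df t <= 0) -> f T <= f a.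
Proof.
  intros [ha haT] Hd Hn.
  destruct (MVT_gen f a T df) as [c [hc Hc]].
  - intros x hx. rewrite Rmin_left in hx by lra. rewrite Rmax_right in hx by lra. apply Hd. lra.
  - intros x hx. rewrite Rmin_left in hx by lra. rewrite Rmax_right in hx by lra.
    apply continuity_pt_filterlim. apply (@ex_derive_continuous R_AbsRing R_NormedModule). eexists. apply Hd. lra.
  - rewrite Rmin_left in hc by lra. rewrite Rmax_right in hc by lra.
    assert (df c * (T - a) <= 0).
    { assert (df c <= 0) by (apply Hn; lra). nra. }
    lra.
Qed.

Lemma bootstrap (h : R -> R) (b c : R) : c < b -> h 0 < b ->
  (forall t, 0 <= t -> forall eps, 0 < eps -> exists eta, 0 < eta /\
     forall tau, 0 <= tau -> Rabs (tau - t) < eta -> Rabs (h tau - h t) < eps) ->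
  (forall T, 0 <= T -> (forall tau, 0 <= tau <= T -> h tau < b) -> h T <= c) ->
  forall t, 0 <= t -> h t <= c.
Proof.
  intros hcb h0 Hc Hb t1 ht1.
  set (E := fun T => 0 <= T <= t1 /\ forall tau, 0 <= tau <= T -> h tau < b).
  assert (hE0 : E 0).
  { split; [lra|]. intros tau Htau. replace tau with 0 by lra. exact h0. }
  assert (hbd : bound E) by (exists t1; intros T [HT _]; lra).
  destruct (completeness E hbd (ex_intro _ 0 hE0)) as [S [HS1 HS2]].
  assert (hS0 : 0 <= S) by (apply HS1; exact hE0).
  assert (hSt : S <= t1) by (apply HS2; intros T [HT _]; lra).
  assert (A : forall tau, 0 <= tau < S -> h tau < b).
  { intros tau [h1 h2].
    destruct (classic (exists T, E T /\ tau < T)) as [[T [[_ HT] hT]]|Hn].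
    - apply HT; lra.
    - exfalso. assert (S <= tau).
      { apply HS2. intros T HT. destruct (Rle_or_lt T tau); auto.
        exfalso; apply Hn; exists T; auto. }
      lra. }
  assert (B : forall tau, 0 <= tau < S -> h tau <= c).
  { intros tau Ht. apply Hb; [lra|]. intros s Hs. apply A; lra. }
  assert (C : h S <= c).
  { destruct (Req_dec S 0) as [HS|HS].
    - rewrite HS. apply Hb; [lra|]. intros s Hs. replace s with 0 by lra. exact h0.
    - destruct (Rle_or_lt (h S) c) as [|Hlt]; auto. exfalso.
      destruct (Hc S hS0 (h S - c)) as [eta [heta Heta]]; [lra|].
      set (tau := Rmax 0 (S - eta / 2)).
      assert (htau0 : 0 <= tau) by apply Rmax_l.
      assert (htauS : tau < S) by (unfold tau; apply Rmax_lub_lt; lra).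
      assert (htau2 : S - eta / 2 <= tau) by apply Rmax_r.
      assert (Rabs (tau - S) < eta) by (rewrite Rabs_left by lra; lra).
      specialize (Heta tau htau0 H). specialize (B tau (conj htau0 htauS)).
      apply Rabs_def2 in Heta. lra. }
  assert (ES : forall tau, 0 <= tau <= S -> h tau < b).
  { intros tau Ht. destruct (Req_dec tau S) as [->|Hne]; [lra|]. apply A; lra. }
  destruct (Req_dec S t1) as [HSt|HSt].
  - subst S. apply Hb; auto.
  - exfalso.
    destruct (Hc S hS0 (b - c)) as [eta [heta Heta]]; [lra|].
    set (T' := Rmin t1 (S + eta / 2)).
    assert (E T').
    { split. split; [unfold T'; apply Rmin_glb; lra | apply Rmin_l].
      intros tau Ht. destruct (Rle_or_lt tau S).
      - apply ES; lra.
      - assert (tau <= S + eta / 2) by (pose proof (Rmin_r t1 (S + eta/2)); fold T' in H0; lra).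
        assert (Rabs (tau - S) < eta) by (rewrite Rabs_pos_eq by lra; lra).
        specialize (Heta tau (proj1 Ht) H1). apply Rabs_def2 in Heta. lra. }
    assert (T' <= S) by (apply HS1; auto).
    assert (S < T') by (unfold T'; apply Rmin_glb_lt; lra).
    lra.
Qed.

Definition hd (e0 e1 e2 x0 x1 x2 : R) := (x0 - e0)^2 + (x1 - e1)^2 + (x2 - e2)^2.

Lemma upper_x p l e0 e1 e2 w0 w1 w2 ce : EigenData p l e0 e1 e2 w0 w1 w2 ->
  1 <= ce * (e0 * e0) -> 1 <= ce * (e1 * e1) -> 1 <= ce * (e2 * e2) ->
  forall x0 x1 x2, hd e0 e1 e2 x0 x1 x2 * (4 * ((w0 + w1 + w2) * (w0 + w1 + w2))) <= 1 ->
  1/2 <= Df w0 w1 w2 x0 x1 x2 /\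
  Nf e0 e1 e2 w0 w1 w2 x0 x1 x2 <= (1 + 48 * ce * hd e0 e1 e2 x0 x1 x2) *
     (Df w0 w1 w2 x0 x1 x2 * Df w0 w1 w2 x0 x1 x2).
Proof.
  intros (he0 & he1 & he2 & hs & hw0 & hw1 & hw2 & hn & _) c0 c1 c2 x0 x1 x2 hh.
  pose proof (upper_v e0 e1 e2 w0 w1 w2 (x0/e0) (x1/e1) (x2/e2) ce he0 he1 he2 hs hw0 hw1 hw2 hn c0 c1 c2) as U.
  simpl in U.
  replace (e0 * (x0/e0)) with x0 in U by (field; lra).
  replace (e1 * (x1/e1)) with x1 in U by (field; lra).
  replace (e2 * (x2/e2)) with x2 in U by (field; lra).
  unfold hd in *. specialize (U hh). destruct U as [U1 U2].
  assert (ED : w0 * e0 * (x0 / e0) + w1 * e1 * (x1 / e1) + w2 * e2 * (x2 / e2) = Df w0 w1 w2 x0 x1 x2)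
    by (unfold Df; field; repeat split; lra).
  assert (EN : w0 * e0 * (x0 / e0 * (x0 / e0)) + w1 * e1 * (x1 / e1 * (x1 / e1)) + w2 * e2 * (x2 / e2 * (x2 / e2))
     = Nf e0 e1 e2 w0 w1 w2 x0 x1 x2) by (unfold Nf; field; repeat split; lra).
  rewrite ED in U1, U2. rewrite EN in U2. auto.
Qed.

Lemma lower_x p l e0 e1 e2 w0 w1 w2 eta : EigenData p l e0 e1 e2 w0 w1 w2 ->
  0 <= eta -> eta <= (w0 * e0) * (w1 * e1) * (w2 * e2) / 8 ->
  forall x0 x1 x2, x0 + x1 + x2 = 1 ->
  Nf e0 e1 e2 w0 w1 w2 x0 x1 x2 <= (1 + eta) *
     (Df w0 w1 w2 x0 x1 x2 * Df w0 w1 w2 x0 x1 x2) ->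
  hd e0 e1 e2 x0 x1 x2 <= 12 * eta / ((w0 * e0) * (w1 * e1) * (w2 * e2)).
Proof.
  intros (he0 & he1 & he2 & hs & hw0 & hw1 & hw2 & hn & _) he1' he2' x0 x1 x2 hx hN.
  assert (hp0 : 0 < w0 * e0) by nra. assert (hp1 : 0 < w1 * e1) by nra. assert (hp2 : 0 < w2 * e2) by nra.
  pose proof (lower_v e0 e1 e2 (w0*e0) (w1*e1) (w2*e2) (x0/e0) (x1/e1) (x2/e2) eta he0 he1 he2 hs
     hp0 hp1 hp2 hn) as L.
  replace (e0 * (x0/e0)) with x0 in L by (field; lra).
  replace (e1 * (x1/e1)) with x1 in L by (field; lra).
  replace (e2 * (x2/e2)) with x2 in L by (field; lra).
  unfold hd. apply L; auto.
  assert (ED : w0 * e0 * (x0 / e0) + w1 * e1 * (x1 / e1) + w2 * e2 * (x2 / e2) = Df w0 w1 w2 x0 x1 x2)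
    by (unfold Df; field; repeat split; lra).
  assert (EN : w0 * e0 * (x0 / e0 * (x0 / e0)) + w1 * e1 * (x1 / e1 * (x1 / e1)) + w2 * e2 * (x2 / e2 * (x2 / e2))
     = Nf e0 e1 e2 w0 w1 w2 x0 x1 x2) by (unfold Nf; field; repeat split; lra).
  rewrite ED, EN. exact hN.
Qed.

Ltac rl := repeat first [ apply RL_plus | apply RL_mult | apply RL_const | assumption ].

Lemma RL_minus (f g : R -> R) (a b : R) : filterlim f (at_right 0) (locally a) ->
  filterlim g (at_right 0) (locally b) ->
  filterlim (fun t => f t - g t) (at_right 0) (locally (a - b)).
Proof.
  intros Hf Hg. unfold Rminus.
  apply RL_plus; auto.
  replace (- b) with (-1 * b) by ring.
  apply (filterlim_ext (fun t => -1 * g t)); [intro; ring|].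
  apply RL_mult; auto. apply RL_const.
Qed.

Lemma RL_eps_le (f : R -> R) a T : filterlim f (at_right 0) (locally a) -> 0 < T ->
  forall eps, 0 < eps -> exists s, 0 < s <= T /\ f s < a + eps.
Proof.
  intros H hT eps he. destruct (right_eps f a H eps he) as [eta [heta Heta]].
  exists (Rmin T (eta / 2)). assert (0 < Rmin T (eta/2)) by (apply Rmin_glb_lt; lra).
  split. split; [lra | apply Rmin_l].
  assert (Rmin T (eta/2) <= eta / 2) by apply Rmin_r.
  assert (Rmin T (eta/2) < eta) by lra.
  specialize (Heta (Rmin T (eta/2)) (conj H0 H2)). apply Rabs_def2 in Heta. lra.
Qed.

Lemma Dx (f : R -> R) t l : is_derive f t l -> Derive (fun x : R => f x) t = l.
Proof. intro H. apply is_derive_unique. exact H. Qed.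

Lemma sum_one p x0 x1 x2 K T : is_solution p x0 x1 x2 -> x0 0 + x1 0 + x2 0 = 1 -> 0 <= K ->
  (forall tau, 0 < tau <= T -> - K <= growth p (x0 tau) (x1 tau) (x2 tau)) ->
  forall tau, 0 < tau <= T -> x0 tau + x1 tau + x2 tau = 1.
Proof.
  intros [Hd [Hr0 [Hr1 Hr2]]] hs0 hK Hg tau [htau htauT].
  set (f := fun t => (1 - x0 t - x1 t - x2 t) * (1 - x0 t - x1 t - x2 t) * exp (-(2 * K) * t)).
  set (df := fun t => -2 * ((1 - x0 t - x1 t - x2 t) * (1 - x0 t - x1 t - x2 t)) * exp (-(2 * K) * t)
                        * (growth p (x0 t) (x1 t) (x2 t) + K)).
  assert (Hder : forall t, 0 < t -> is_derive f t (df t)).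
  { intros t ht. destruct (Hd t ht) as [d0 [d1 d2]].
    unfold f, df. auto_derive.
    - repeat split; eexists; eauto.
    - rewrite (Dx x0 t _ d0), (Dx x1 t _ d1), (Dx x2 t _ d2).
      unfold F0, F1, F2, growth, Defs.A1, Defs.A2, Defs.A3. ring. }
  assert (Hmono : forall a, 0 < a <= tau -> f tau <= f a).
  { intros a ha. apply (mono_int f df a tau ha).
    - intros t ht. apply Hder. lra.
    - intros t ht. unfold df.
      assert (0 <= (1 - x0 t - x1 t - x2 t) * (1 - x0 t - x1 t - x2 t)) by apply Rle_0_sqr.
      assert (0 < exp (-(2 * K) * t)) by apply exp_pos.
      assert (0 <= growth p (x0 t) (x1 t) (x2 t) + K) by (pose proof (Hg t ltac:(lra)); lra).
      assert (0 <= (1 - x0 t - x1 t - x2 t) * (1 - x0 t - x1 t - x2 t) * exp (-(2 * K) * t)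
                   * (growth p (x0 t) (x1 t) (x2 t) + K)) by (apply Rmult_le_pos; [apply Rmult_le_pos|]; lra).
      lra. }
  set (u := fun t => 1 - x0 t - x1 t - x2 t).
  assert (Hu : filterlim (fun t => u t * u t) (at_right 0) (locally (u 0 * u 0))).
  { unfold u. apply RL_mult; repeat apply RL_minus; auto; apply RL_const. }
  assert (hu0 : u 0 * u 0 = 0) by (unfold u; replace (1 - x0 0 - x1 0 - x2 0) with 0 by lra; ring).
  rewrite hu0 in Hu.
  assert (hf0 : f tau <= 0).
  { apply Rnot_lt_le. intro Hlt.
    destruct (RL_eps_le _ 0 tau Hu htau (f tau) Hlt) as [a [ha Ha]].
    pose proof (Hmono a ha).
    assert (f a <= u a * u a).
    { unfold f, u. assert (exp (-(2 * K) * a) <= 1).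
      { rewrite <- exp_0. destruct (Req_dec K 0) as [->|HK0].
        - replace (-(2*0)*a) with 0 by ring. lra.
        - left. apply exp_increasing. nra. }
      assert (0 <= (1 - x0 a - x1 a - x2 a) * (1 - x0 a - x1 a - x2 a)) by apply Rle_0_sqr.
      nra. }
    lra. }
  unfold f in hf0.
  assert (0 < exp (-(2 * K) * tau)) by apply exp_pos.
  assert (hz : (1 - x0 tau - x1 tau - x2 tau) * (1 - x0 tau - x1 tau - x2 tau) = 0).
  { assert (0 <= (1 - x0 tau - x1 tau - x2 tau) * (1 - x0 tau - x1 tau - x2 tau)) by apply Rle_0_sqr.
    destruct H0 as [H0|H0]; [|auto]. exfalso.
    assert (0 < (1 - x0 tau - x1 tau - x2 tau) * (1 - x0 tau - x1 tau - x2 tau) * exp (-(2 * K) * tau))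
      by (apply Rmult_lt_0_compat; auto). lra. }
  apply Rmult_integral in hz. lra.
Qed.

Definition Vf (e0 e1 e2 w0 w1 w2 x0 x1 x2 : R) :=
  Nf e0 e1 e2 w0 w1 w2 x0 x1 x2 / (Df w0 w1 w2 x0 x1 x2 * Df w0 w1 w2 x0 x1 x2).

Definition rawd p (e0 e1 e2 w0 w1 w2 x0 x1 x2 : R) :=
  let D := Df w0 w1 w2 x0 x1 x2 in
  let N := Nf e0 e1 e2 w0 w1 w2 x0 x1 x2 in
  let Np := 2 * (w0 * x0 * F0 p x0 x1 x2 / e0 + w1 * x1 * F1 p x0 x1 x2 / e1 + w2 * x2 * F2 p x0 x1 x2 / e2) in
  let Dp := w0 * F0 p x0 x1 x2 + w1 * F1 p x0 x1 x2 + w2 * F2 p x0 x1 x2 in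
  (Np * D - 2 * N * Dp) / (D * D * D).

Lemma raw_eq p l e0 e1 e2 w0 w1 w2 : EigenData p l e0 e1 e2 w0 w1 w2 ->
  forall x0 x1 x2, Df w0 w1 w2 x0 x1 x2 <> 0 ->
  rawd p e0 e1 e2 w0 w1 w2 x0 x1 x2 = 2 * Bf p l e0 e1 e2 w0 w1 w2 x0 x1 x2 /
     (Df w0 w1 w2 x0 x1 x2 * Df w0 w1 w2 x0 x1 x2).
Proof.
  intros (he0 & he1 & he2 & hs & hw0 & hw1 & hw2 & hn & r0 & r1 & r2 & c0 & c1 & c2 & hD) x0 x1 x2 hD0.
  set (g := growth p x0 x1 x2).
  assert (HF0 : F0 p x0 x1 x2 = Q0 p x0 x1 x2 - x0 * g) by reflexivity.
  assert (HF1 : F1 p x0 x1 x2 = Q1 p x0 x1 x2 - x1 * g) by reflexivity.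
  assert (HF2 : F2 p x0 x1 x2 = Q2 p x0 x1 x2 - x2 * g) by reflexivity.
  assert (HQ : w0 * Q0 p x0 x1 x2 + w1 * Q1 p x0 x1 x2 + w2 * Q2 p x0 x1 x2 = l * Df w0 w1 w2 x0 x1 x2).
  { transitivity (x0 * (w0 * al1 p + w1 * al2 p + w2 * al3 p) + x1 * (w0 * be2 p + w1 * dd1 p + w2 * be3 p)
       + x2 * (w0 * ga2 p + w1 * ga3 p + w2 * dd2 p)). unfold Q0, Q1, Q2; ring.
    rewrite c0, c1, c2. unfold Df; ring. }
  unfold rawd, Bf. cbv zeta. rewrite HF0, HF1, HF2.
  assert (HDp : w0 * (Q0 p x0 x1 x2 - x0 * g) + w1 * (Q1 p x0 x1 x2 - x1 * g) + w2 * (Q2 p x0 x1 x2 - x2 * g)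
     = (l - g) * Df w0 w1 w2 x0 x1 x2).
  { transitivity (w0 * Q0 p x0 x1 x2 + w1 * Q1 p x0 x1 x2 + w2 * Q2 p x0 x1 x2 - g * Df w0 w1 w2 x0 x1 x2).
    unfold Df; ring. rewrite HQ. ring. }
  rewrite HDp. unfold Nf. field. repeat split; lra.
Qed.

Lemma V_mono p l e0 e1 e2 w0 w1 w2 x0 x1 x2 T : params_pos p -> EigenData p l e0 e1 e2 w0 w1 w2 ->
  is_solution p x0 x1 x2 -> 0 <= T ->
  (forall tau, 0 <= tau <= T -> 0 < Df w0 w1 w2 (x0 tau) (x1 tau) (x2 tau)) ->
  Vf e0 e1 e2 w0 w1 w2 (x0 T) (x1 T) (x2 T) <= Vf e0 e1 e2 w0 w1 w2 (x0 0) (x1 0) (x2 0).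
Proof.
  intros hp HE Hsol hT HD.
  pose proof HE as (he0 & he1 & he2 & _).
  destruct Hsol as [Hd [Hr0 [Hr1 Hr2]]].
  destruct (Req_dec T 0) as [->|hT0]; [lra|].
  set (V := fun t => Vf e0 e1 e2 w0 w1 w2 (x0 t) (x1 t) (x2 t)).
  set (df := fun t => rawd p e0 e1 e2 w0 w1 w2 (x0 t) (x1 t) (x2 t)).
  assert (Hder : forall t, 0 < t <= T -> is_derive V t (df t)).
  { intros t ht. destruct (Hd t (proj1 ht)) as [d0 [d1 d2]].
    pose proof (HD t ltac:(lra)) as hDt.
    unfold V, df, Vf, Nf, Df, rawd. cbv zeta. unfold Nf, Df in *. auto_derive.
    - repeat split; try (eexists; eauto); try lra.
      intro Hz. assert (0 < (w0 * x0 t + w1 * x1 t + w2 * x2 t) * (w0 * x0 t + w1 * x1 t + w2 * x2 t)) by nra.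
      lra.
    - rewrite (Dx x0 t _ d0), (Dx x1 t _ d1), (Dx x2 t _ d2).
      field. repeat split; lra. }
  assert (Hmono : forall a, 0 < a <= T -> V T <= V a).
  { intros a ha. apply (mono_int V df a T ha).
    - intros t ht. apply Hder. lra.
    - intros t ht. unfold df. pose proof (HD t ltac:(lra)) as hDt.
      rewrite (raw_eq p l e0 e1 e2 w0 w1 w2 HE) by lra.
      pose proof (B_nonpos p l e0 e1 e2 w0 w1 w2 hp HE (x0 t) (x1 t) (x2 t)).
      assert (0 < Df w0 w1 w2 (x0 t) (x1 t) (x2 t) * Df w0 w1 w2 (x0 t) (x1 t) (x2 t)) by nra.
      unfold Rdiv. assert (0 < / (Df w0 w1 w2 (x0 t) (x1 t) (x2 t) * Df w0 w1 w2 (x0 t) (x1 t) (x2 t)))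
        by (apply Rinv_0_lt_compat; auto).
      nra. }
  assert (HR : filterlim V (at_right 0) (locally (V 0))).
  { pose proof (HD 0 ltac:(lra)) as hD0.
    unfold V, Vf, Nf, Df. unfold Df in hD0. unfold Rdiv.
    apply RL_mult.
    - rl.
    - apply RL_inv; [rl|]. intro Hz.
      assert (0 < (w0 * x0 0 + w1 * x1 0 + w2 * x2 0) * (w0 * x0 0 + w1 * x1 0 + w2 * x2 0)) by nra. lra. }
  apply Rnot_lt_le. intro Hlt. fold (V T) (V 0) in Hlt |- *.
  destruct (RL_eps_le V (V 0) T HR ltac:(lra) (V T - V 0) ltac:(lra)) as [a [ha Ha]].
  pose proof (Hmono a ha). lra.
Qed.

Lemma RL_pow2 (f : R -> R) (a : R) : filterlim f (at_right 0) (locally a) ->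
  filterlim (fun t => (f t)^2) (at_right 0) (locally (a^2)).
Proof.
  intro H. apply (filterlim_ext (fun t => f t * f t)); [intro; ring|].
  replace (a^2) with (a*a) by ring. apply RL_mult; auto.
Qed.

Lemma abs_bound a x : Rabs x <= 2 -> -(2 * Rabs a) <= a * x.
Proof.
  intro H. pose proof (Rabs_pos a).
  assert (Rabs (a * x) <= 2 * Rabs a) by (rewrite Rabs_mult; nra).
  pose proof (Rle_abs (- (a * x))). rewrite Rabs_Ropp in H2. lra.
Qed.

Lemma stab p l e0 e1 e2 w0 w1 w2 : params_pos p -> EigenData p l e0 e1 e2 w0 w1 w2 ->
  lyapunov_stable p e0 e1 e2.
Proof.
  intros hp HE.
  pose proof HE as (he0 & he1 & he2 & hs & hw0 & hw1 & hw2 & hn & _).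
  intros eps heps.
  set (Ws := w0 + w1 + w2).
  assert (hWs : 0 < Ws) by (unfold Ws; lra).
  set (b := Rmin 1 (/ (4 * (Ws * Ws)))).
  assert (hb0 : 0 < b).
  { unfold b. apply Rmin_glb_lt; [lra|]. apply Rinv_0_lt_compat. nra. }
  assert (hb1 : b <= 1) by apply Rmin_l.
  assert (hb2 : b * (4 * (Ws * Ws)) <= 1).
  { assert (b <= / (4 * (Ws * Ws))) by apply Rmin_r.
    assert (0 < 4 * (Ws * Ws)) by nra.
    replace 1 with (/ (4 * (Ws * Ws)) * (4 * (Ws * Ws))) by (field; lra).
    apply Rmult_le_compat_r; lra. }
  set (m := w0 * e0 * (w1 * e1) * (w2 * e2)).
  assert (hm : 0 < m) by (unfold m; repeat apply Rmult_lt_0_compat; lra).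
  set (ce := / (e0 * e1 * e2 * (e0 * e1 * e2))).
  assert (hce0 : 0 < ce) by (unfold ce; apply Rinv_0_lt_compat; repeat apply Rmult_lt_0_compat; lra).
  assert (cel : forall a b' c', 0 < a -> 0 < b' -> 0 < c' -> b' <= 1 -> c' <= 1 ->
     1 <= / (a * b' * c' * (a * b' * c')) * (a * a)).
  { intros a b' c' ha hb' hc' hb1' hc1'.
    replace (/ (a * b' * c' * (a * b' * c')) * (a * a)) with (/ (b' * c' * (b' * c'))) by (field; repeat split; lra).
    assert (hbc : 0 < b' * c') by (apply Rmult_lt_0_compat; lra).
    assert (hbc1 : b' * c' <= 1) by (replace 1 with (1 * 1) by ring; apply Rmult_le_compat; lra).
    rewrite <- Rinv_1. apply Rinv_le_contravar. apply Rmult_lt_0_compat; lra.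
    replace 1 with (1 * 1) by ring; apply Rmult_le_compat; lra. }
  assert (c0 : 1 <= ce * (e0 * e0)) by (apply cel; lra).
  assert (c1 : 1 <= ce * (e1 * e1)).
  { replace ce with (/ (e1 * e0 * e2 * (e1 * e0 * e2))) by (unfold ce; f_equal; ring). apply cel; lra. }
  assert (c2 : 1 <= ce * (e2 * e2)).
  { replace ce with (/ (e2 * e0 * e1 * (e2 * e0 * e1))) by (unfold ce; f_equal; ring). apply cel; lra. }
  set (K := 2 * (Rabs (Defs.A1 p) + Rabs (Defs.A2 p) + Rabs (Defs.A3 p))).
  assert (hK : 0 <= K).
  { unfold K. pose proof (Rabs_pos (Defs.A1 p)). pose proof (Rabs_pos (Defs.A2 p)).
    pose proof (Rabs_pos (Defs.A3 p)). lra. }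
  set (c := Rmin (eps * eps) b / 2).
  assert (hcd : c = Rmin (eps * eps) b / 2) by reflexivity.
  assert (hmin : 0 < Rmin (eps * eps) b) by (apply Rmin_glb_lt; [apply Rmult_lt_0_compat|]; lra).
  assert (hc0 : 0 < c) by lra.
  assert (hcb : c < b) by (pose proof (Rmin_r (eps * eps) b); lra).
  assert (hce : c < eps * eps) by (pose proof (Rmin_l (eps * eps) b); lra).
  set (eta := Rmin (m / 8) (c * m / 12)).
  assert (heta0 : 0 < eta).
  { unfold eta; apply Rmin_glb_lt; [lra|]. assert (0 < c * m) by (apply Rmult_lt_0_compat; lra). lra. }
  assert (heta1 : eta <= m / 8) by apply Rmin_l.
  assert (heta2 : 12 * eta / m <= c).
  { assert (eta <= c * m / 12) by apply Rmin_r.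
    apply (Rmult_le_reg_l m); auto. replace (m * (12 * eta / m)) with (12 * eta) by (field; lra). nra. }
  set (d2 := Rmin b (eta / (48 * ce)) / 2).
  assert (hd20 : 0 < d2).
  { unfold d2. assert (0 < Rmin b (eta / (48 * ce))). apply Rmin_glb_lt; auto.
    apply Rdiv_lt_0_compat; lra. lra. }
  assert (hd2b : d2 < b) by (unfold d2; pose proof (Rmin_l b (eta / (48 * ce))); lra).
  assert (hd2e : 48 * ce * d2 <= eta).
  { unfold d2. pose proof (Rmin_r b (eta / (48 * ce))).
    assert (Rmin b (eta / (48 * ce)) / 2 <= eta / (48 * ce)).
    { assert (0 < Rmin b (eta / (48 * ce))) by (apply Rmin_glb_lt; auto; apply Rdiv_lt_0_compat; lra). lra. }
    apply (Rmult_le_compat_l (48 * ce)) in H0; [|lra].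
    replace (48 * ce * (eta / (48 * ce))) with eta in H0 by (field; lra). lra. }
  set (delta := Rmin 1 d2).
  exists delta. split; [unfold delta; apply Rmin_glb_lt; lra|].
  intros x0 x1 x2 Hsol Hsim Hdist t ht.
  set (h := fun tau => hd e0 e1 e2 (x0 tau) (x1 tau) (x2 tau)).
  assert (hh0' : forall tau, 0 <= h tau).
  { intro tau. unfold h, hd. pose proof (pow2_ge_0 (x0 tau - e0)). pose proof (pow2_ge_0 (x1 tau - e1)).
    pose proof (pow2_ge_0 (x2 tau - e2)). lra. }
  assert (hh0 : h 0 < d2).
  { unfold dist3 in Hdist. fold (hd e0 e1 e2 (x0 0) (x1 0) (x2 0)) in Hdist. fold (h 0) in Hdist.
    pose proof (sqrt_pos (h 0)). pose proof (sqrt_sqrt (h 0) (hh0' 0)).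
    assert (delta <= 1) by apply Rmin_l. assert (delta <= d2) by apply Rmin_r.
    nra. }
  destruct Hsim as (_ & _ & _ & hs0).
  assert (hb4 : forall tau, h tau < b -> h tau * (4 * ((w0 + w1 + w2) * (w0 + w1 + w2))) <= 1).
  { intros tau H. fold Ws. assert (0 < 4 * (Ws * Ws)) by nra. nra. }
  destruct (upper_x p l e0 e1 e2 w0 w1 w2 ce HE c0 c1 c2 (x0 0) (x1 0) (x2 0) (hb4 0 ltac:(lra))) as [U01 U02].
  fold (h 0) in U02.
  assert (HV0 : Vf e0 e1 e2 w0 w1 w2 (x0 0) (x1 0) (x2 0) <= 1 + eta).
  { unfold Vf. assert (0 < Df w0 w1 w2 (x0 0) (x1 0) (x2 0) * Df w0 w1 w2 (x0 0) (x1 0) (x2 0)) by nra.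
    apply (Rmult_le_reg_r (Df w0 w1 w2 (x0 0) (x1 0) (x2 0) * Df w0 w1 w2 (x0 0) (x1 0) (x2 0))); auto.
    unfold Rdiv. rewrite Rmult_assoc, Rinv_l by lra. rewrite Rmult_1_r.
    assert (48 * ce * h 0 <= eta) by nra. nra. }
  assert (Hboot : h t <= c).
  { apply (bootstrap h b c hcb ltac:(lra)); auto.
    -
      destruct Hsol as [Hd [Hr0 [Hr1 Hr2]]].
      intros t0 ht0 ep hep. destruct (Req_dec t0 0) as [->|ht00].
      + assert (HR : filterlim h (at_right 0) (locally (h 0))).
        { unfold h, hd. apply RL_plus; [apply RL_plus|]; apply RL_pow2; apply RL_minus; auto; apply RL_const. }
        destruct (right_eps h (h 0) HR ep hep) as [et [het Het]].
        exists et. split; auto. intros tau htau Htau.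
        destruct (Req_dec tau 0) as [->|Hne].
        * replace (h 0 - h 0) with 0 by ring. rewrite Rabs_R0. lra.
        * apply Het. rewrite Rminus_0_r in Htau. rewrite Rabs_pos_eq in Htau by lra. lra.
      + assert (hc : continuous h t0).
        { apply (@ex_derive_continuous R_AbsRing R_NormedModule).
          destruct (Hd t0 ltac:(lra)) as [d0 [d1 d2']].
          unfold h, hd. auto_derive. repeat split; eexists; eauto. }
        destruct (cont_eps h t0 hc ep hep) as [et [het Het]].
        exists et. split; auto.
    - intros T hT HT.
      assert (Hx : forall tau, 0 <= tau <= T -> forall xi ei, 0 < ei -> ei < 1 -> (xi - ei)^2 <= h tau -> Rabs xi <= 2).
      { intros tau htau xi ei hei hei1 Hxi. pose proof (HT tau htau).
        assert ((xi - ei) ^ 2 < 1) by lra.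
        apply Rabs_le. nra. }
      assert (he0' : e0 < 1) by lra. assert (he1' : e1 < 1) by lra. assert (he2' : e2 < 1) by lra.
      assert (Hsq : forall tau, (x0 tau - e0)^2 <= h tau /\ (x1 tau - e1)^2 <= h tau /\ (x2 tau - e2)^2 <= h tau).
      { intro tau. unfold h, hd. pose proof (pow2_ge_0 (x0 tau - e0)). pose proof (pow2_ge_0 (x1 tau - e1)).
        pose proof (pow2_ge_0 (x2 tau - e2)). repeat split; lra. }
      assert (HS : x0 T + x1 T + x2 T = 1).
      { destruct (Req_dec T 0) as [->|HT0]; auto.
        apply (sum_one p x0 x1 x2 K T Hsol hs0 hK); [|lra].
        intros tau htau. destruct (Hsq tau) as (q0 & q1 & q2).
        pose proof (Hx tau ltac:(lra) _ _ he0 he0' q0). pose proof (Hx tau ltac:(lra) _ _ he1 he1' q1).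
        pose proof (Hx tau ltac:(lra) _ _ he2 he2' q2).
        unfold growth, K.
        pose proof (abs_bound (Defs.A1 p) (x0 tau) H). pose proof (abs_bound (Defs.A2 p) (x1 tau) H0).
        pose proof (abs_bound (Defs.A3 p) (x2 tau) H1). lra. }
      assert (HDpos : forall tau, 0 <= tau <= T -> 0 < Df w0 w1 w2 (x0 tau) (x1 tau) (x2 tau)).
      { intros tau htau.
        destruct (upper_x p l e0 e1 e2 w0 w1 w2 ce HE c0 c1 c2 (x0 tau) (x1 tau) (x2 tau)
                   (hb4 tau (HT tau htau))) as [U _]. lra. }
      pose proof (V_mono p l e0 e1 e2 w0 w1 w2 x0 x1 x2 T hp HE Hsol hT HDpos) as HVT.
      pose proof (HDpos T ltac:(lra)) as hDT.
      assert (HN : Nf e0 e1 e2 w0 w1 w2 (x0 T) (x1 T) (x2 T) <= (1 + eta) *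
         (Df w0 w1 w2 (x0 T) (x1 T) (x2 T) * Df w0 w1 w2 (x0 T) (x1 T) (x2 T))).
      { assert (HV : Vf e0 e1 e2 w0 w1 w2 (x0 T) (x1 T) (x2 T) <= 1 + eta) by lra.
        unfold Vf in HV.
        assert (0 < Df w0 w1 w2 (x0 T) (x1 T) (x2 T) * Df w0 w1 w2 (x0 T) (x1 T) (x2 T)) by nra.
        apply (Rmult_le_compat_r (Df w0 w1 w2 (x0 T) (x1 T) (x2 T) * Df w0 w1 w2 (x0 T) (x1 T) (x2 T))) in HV; [|lra].
        unfold Rdiv in HV. rewrite Rmult_assoc, Rinv_l in HV by lra. lra. }
      pose proof (lower_x p l e0 e1 e2 w0 w1 w2 eta HE ltac:(lra) ltac:(fold m; lra) (x0 T) (x1 T) (x2 T) HS HN).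
      fold m in H. unfold h. lra. }
  unfold dist3. fold (hd e0 e1 e2 (x0 t) (x1 t) (x2 t)). fold (h t).
  pose proof (sqrt_pos (h t)). pose proof (sqrt_sqrt (h t) (hh0' t)).
  destruct (Rlt_or_le (sqrt (h t)) eps) as [|Hge]; auto.
  exfalso. assert (eps * eps <= sqrt (h t) * sqrt (h t)) by nra. lra.
Qed.

Theorem theorem3 (p : params) (hp : params_pos p) :
  exists e0 e1 e2 : R,
    (0 < e0 /\ 0 < e1 /\ 0 < e2 /\ in_simplex e0 e1 e2 /\
     is_fixed_point p e0 e1 e2) /\
    (forall y0 y1 y2 : R,
       0 < y0 -> 0 < y1 -> 0 < y2 -> in_simplex y0 y1 y2 ->
       is_fixed_point p y0 y1 y2 -> y0 = e0 /\ y1 = e1 /\ y2 = e2) /\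
    lyapunov_stable p e0 e1 e2.
Proof.
  destruct (eig p hp) as (l & e0 & e1 & e2 & w0 & w1 & w2 & HH).
  assert (HE : EigenData p l e0 e1 e2 w0 w1 w2) by exact HH.
  pose proof HE as (he0 & he1 & he2 & hs & _).
  exists e0, e1, e2. split; [|split].
  - split; [lra|]. split; [lra|]. split; [lra|]. split.
    + unfold in_simplex. repeat split; lra.
    + exact (e_fixed p l e0 e1 e2 w0 w1 w2 HE).
  - exact (uniq_fixed p l e0 e1 e2 w0 w1 w2 hp HE).
  - exact (stab p l e0 e1 e2 w0 w1 w2 hp HE).
Qed.
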